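(* Let $1\le k\le n$, and consider a storage network with node set $\mathcal{N}$ and RTT function $\tau$. (i) If $\mathcal{C}$ is an uncoded storage scheme that is admissible on some nearest-neighbor graph $\mathcal{G}_{k-1}$, then \[ L_{avg}(\mathcal{C})=\frac{1}{kn}\sum_{i\in\mathcal{N}}\sum_{j=0}^{k-1}\lambda_j^{(i)}. \] (ii) Conversely, if an uncoded storage scheme $\mathcal{C}$ satisfies $L_{max}^{(i)}(\mathcal{C})=\lambda_{k-1}^{(i)}$ for all $i\in\mathcal{N}$ and $L_{avg}(\mathcal{C})=\frac{1}{kn}\sum_{i\in\mathcal{N}}\sum_{j=0}^{k-1}\lambda_j^{(i)}$, then $\mathcal{C}$ is admissible on some nearest-neighbor graph $\mathcal{G}_{k-1}$.
   Context: A storage network consists of $n$ nodes $\mathcal{N}=\{1,\dots,n\}$ and a round-trip-time (RTT) function $\tau:\mathcal{N}\times\mathcal{N}\to\mathbb{R}_{\ge 0}$ with $\tau(i,j)=\tau(j,i)$ and $\tau(i,i)=0$. There are $k\le n$ information files $W_1,\dots,W_k$. An uncoded storage scheme stores at each node $i$ exactly one file, $X_i=W_{\sigma(i)}$, for a map $\sigma:\mathcal{N}\to[k]$ (which must be surjective so that all files are stored). File $W_j$ is decodable from $S\subseteq\mathcal{N}$ iff some $t\in S$ has $\sigma(t)=j$. The latency $l_j^{(i)}=\min\{L\ge0: W_j$ decodable from $\{t:\tau(t,i)\le L\}\}$; $L_{max}^{(i)}(\mathcal{C})=\max_{j\in[k]}l_j^{(i)}$ and $L_{avg}(\mathcal{C})=\frac{1}{kn}\sum_{i\in\mathcal{N}}\sum_{j\in[k]}l_j^{(i)}$.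 For node $i$, $\lambda_0^{(i)}\le\dots\le\lambda_{n-1}^{(i)}$ is the sorted list of $\{\tau(j,i):j\in\mathcal{N}\}$ ($\lambda_0^{(i)}=0$). A nearest-neighbor graph $\mathcal{G}_{k-1}$ is a directed graph on $\mathcal{N}$ in which each node $i$ has incoming edges from exactly $k-1$ other nodes whose RTTs to $i$ are the $k-1$ smallest values $\lambda_1^{(i)},\dots,\lambda_{k-1}^{(i)}$ (ties broken arbitrarily); these are the neighbors of $i$. A scheme is admissible on a directed graph $\mathcal{D}$ on $\mathcal{N}$ if for every node $i$ and every $j\in[k]$, $W_j$ is decodable from $\{i\}$ together with the nodes having an edge into $i$ in $\mathcal{D}$. *)

(* Defs.v *)
From HB Require Import structures.
From mathcomp Require Import all_boot all_order all_algebra.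
From mathcomp Require Import boolp classical_sets reals.
Set Implicit Arguments. Unset Strict Implicit. Unset Printing Implicit Defensive.
Import Order.TTheory GRing.Theory Num.Theory.
Local Open Scope ring_scope.
Local Open Scope classical_set_scope.

(* Nodes are 'I_n, files are 'I_k; an uncoded scheme is sigma : 'I_n -> 'I_k
   (node i stores W_(sigma i)); tau : 'I_n -> 'I_n -> R is the RTT function. *)

Definition rtt_ok (R : realType) (n : nat) (tau : 'I_n -> 'I_n -> R) : Prop :=
  (forall i j, 0 <= tau i j) /\ (forall i j, tau i j = tau j i) /\
  (forall i, tau i i = 0).

Definition decodable (n k : nat) (sigma : 'I_n -> 'I_k) (S : set 'I_n) (j : 'I_k) : Prop :=
  exists t, S t /\ sigma t = j.

Definition latency (R : realType) (n k : nat) (tau : 'I_n -> 'I_n -> R)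
  (sigma : 'I_n -> 'I_k) (i : 'I_n) (j : 'I_k) : R :=
  inf [set L : R | 0 <= L /\ decodable sigma [set t | tau t i <= L] j].

Definition Lmax (R : realType) (n k : nat) (tau : 'I_n -> 'I_n -> R)
  (sigma : 'I_n -> 'I_k) (i : 'I_n) : R :=
  \big[Num.max/0]_(j < k) latency tau sigma i j.

Definition Lavg (R : realType) (n k : nat) (tau : 'I_n -> 'I_n -> R)
  (sigma : 'I_n -> 'I_k) : R :=
  (k * n)%:R^-1 * \sum_(i < n) \sum_(j < k) latency tau sigma i j.

Definition lam (R : realType) (n : nat) (tau : 'I_n -> 'I_n -> R) (i : 'I_n) (j : nat) : R :=
  nth 0 (sort <=%R [seq tau t i | t <- enum 'I_n]) j.

(* A directed graph is given by its in-neighbourhoods nbr i (nodes with an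
   edge into i). Nearest-neighbour graph G_(k-1). *)
Definition nn_graph (R : realType) (n k : nat) (tau : 'I_n -> 'I_n -> R)
  (nbr : 'I_n -> {set 'I_n}) : Prop :=
  forall i, i \notin nbr i /\ #|nbr i| = (k - 1)%N /\
    perm_eq [seq tau t i | t <- enum (nbr i)] [seq lam tau i j | j <- iota 1 (k - 1)].

Definition admissible (n k : nat) (sigma : 'I_n -> 'I_k) (nbr : 'I_n -> {set 'I_n}) : Prop :=
  forall i (j : 'I_k), decodable sigma [set t | t \in i |: nbr i] j.
Arguments nn_graph {R n} k tau nbr.

(* Main.v *)
Require Import Defs.
From HB Require Import structures.
From mathcomp Require Import all_boot all_order all_algebra.
From mathcomp Require Import boolp classical_sets reals.
Import Order.TTheory GRing.Theory Num.Theory.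
Local Open Scope ring_scope.


Lemma count_enumT (T : finType) (P : pred T) : count P (enum T) = #|[set x | P x]|.
Proof.
rewrite cardE /enum_mem size_filter count_filter; apply: eq_count => x; by rewrite !inE andbT.
Qed.

Lemma count_map_enum (T : finType) (U : Type) (g : T -> U) (P : pred U) :
  count P [seq g x | x <- enum T] = #|[set x | P (g x)]|.
Proof. by rewrite count_map -(@count_enumT T (preim g P)); apply: eq_count. Qed.

Lemma nth_sort_le (R : realType) (l a : seq R) :
  (forall x : R, count (fun y : R => (y <= x)%R) a <= count (fun y : R => (y <= x)%R) l)%N ->
  forall m, (m < size a)%N -> nth 0 (sort <=%R l) m <= nth 0 (sort <=%R a) m.
Proof.
move=> H m ma; set x := nth 0 (sort <=%R a) m.
apply: nth_count_le; first exact: sort_le_sorted.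
rewrite count_sort; apply: leq_trans (H x); rewrite -(count_sort <=%R).
rewrite ltnNge; apply/negP => Hc.
have := @nth_count_gt _ R x 0 (sort <=%R a) m (sort_le_sorted a).
by rewrite Hc size_sort ma /= ltxx => /(_ isT).
Qed.

Lemma sum_nth_sort (R : realType) (a : seq R) :
  \sum_(y <- a) y = \sum_(m < size a) nth 0 (sort <=%R a) m.
Proof.
have Ps : perm_eq (sort <=%R a) a by rewrite perm_sort.
by rewrite -(perm_big _ Ps) (big_nth 0) size_sort big_mkord.
Qed.

Lemma sum_sort_le (R : realType) (l a : seq R) :
  (forall x : R, count (fun y : R => (y <= x)%R) a <= count (fun y : R => (y <= x)%R) l)%N ->
  \sum_(m < size a) nth 0 (sort <=%R l) m <= \sum_(y <- a) y.
Proof.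
move=> H; rewrite sum_nth_sort; apply: ler_sum => m _; exact: nth_sort_le.
Qed.

Lemma sum_sort_eq (R : realType) (l a : seq R) :
  (forall x : R, count (fun y : R => (y <= x)%R) a <= count (fun y : R => (y <= x)%R) l)%N ->
  \sum_(m < size a) nth 0 (sort <=%R l) m = \sum_(y <- a) y ->
  perm_eq a [seq nth 0 (sort <=%R l) m | m <- iota 0 (size a)].
Proof.
move=> H E.
have D : \sum_(m < size a) (nth 0 (sort <=%R a) m - nth 0 (sort <=%R l) m) = 0.
  by rewrite sumrB -sum_nth_sort E subrr.
have Z : forall m : 'I_(size a), nth 0 (sort <=%R a) m - nth 0 (sort <=%R l) m = 0.
  move=> m; have := psumr_eq0P _ D; apply => // i _.
  by rewrite subr_ge0 nth_sort_le.
suff E2 : sort <=%R a = [seq nth 0 (sort <=%R l) m | m <- iota 0 (size a)].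
  by rewrite -E2 perm_sym perm_sort perm_refl.
apply: (eq_from_nth (x0 := 0)); first by rewrite size_sort size_map size_iota.
move=> m; rewrite size_sort => Hm.
rewrite (nth_map 0%N) ?size_iota // nth_iota // add0n.
by apply/eqP; rewrite -subr_eq0; apply/eqP; exact: (Z (Ordinal Hm)).
Qed.

Lemma latency_char (R : realType) n k (tau : 'I_n -> 'I_n -> R) (sigma : 'I_n -> 'I_k) i j :
  rtt_ok tau -> (exists t, sigma t = j) ->
  exists t, sigma t = j /\ latency tau sigma i j = tau t i /\
    (forall t', sigma t' = j -> tau t i <= tau t' i).
Proof.
move=> [Hge [Hsym Hdiag]] [t0 Ht0].
have Pt0 : t0 \in [pred t | sigma t == j] by rewrite inE; apply/eqP.
case: (arg_minP (fun t => tau t i) Pt0) => t /eqP Pt Hmin.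
exists t; split => //; split; last by move=> t' Ht'; apply: Hmin; apply/eqP.
rewrite /latency.
set E := (X in inf X).
have Et : E (tau t i).
  rewrite /E /=; split; first exact: Hge.
  by exists t; split => //=.
have lbE : lbound E (tau t i).
  move=> L [_ [t' [Ht'L Ht']]]; apply: le_trans Ht'L; apply: Hmin; exact/eqP.
apply/eqP; rewrite eq_le; apply/andP; split.
- have hl : has_lbound E by exists (tau t i).
  exact: (ge_inf hl Et).
- by apply: lb_le_inf => //; exists (tau t i).
Qed.

Lemma lower_i (R : realType) n k (tau : 'I_n -> 'I_n -> R) i (f : 'I_k -> 'I_n) :
  injective f ->
  \sum_(j < k) lam tau i j <= \sum_(j < k) tau (f j) i /\
  (\sum_(j < k) lam tau i j = \sum_(j < k) tau (f j) i ->
   perm_eq [seq tau (f j) i | j <- enum 'I_k] [seq lam tau i m | m <- iota 0 k]).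
Proof.
move=> finj.
set a := [seq tau (f j) i | j <- enum 'I_k].
set l := [seq tau t i | t <- enum 'I_n].
have sa : size a = k by rewrite size_map size_enum_ord.
have Sa : \sum_(j < k) tau (f j) i = \sum_(y <- a) y by rewrite big_map big_enum.
have Sl : \sum_(j < k) lam tau i j = \sum_(m < size a) nth 0 (sort <=%R l) m by rewrite sa.
have C : forall x : R, (count (fun y : R => (y <= x)%R) a <= count (fun y : R => (y <= x)%R) l)%N.
  move=> x; rewrite !count_map_enum.
  rewrite -(card_imset _ finj); apply: subset_leq_card.
  apply/fintype.subsetP => t /imsetP [j]; rewrite inE => Hj ->; by rewrite inE.
rewrite Sa Sl; split; first exact: sum_sort_le.
by move=> E; have := @sum_sort_eq R l a C E; rewrite sa.
Qed.

Lemma lam0 (R : realType) n (tau : 'I_n -> 'I_n -> R) i : rtt_ok tau -> lam tau i 0 = 0.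
Proof.
move=> [Hge [Hsym Hdiag]]; rewrite /lam; set l := [seq tau t i | t <- enum 'I_n].
apply/eqP; rewrite eq_le; apply/andP; split.
- apply: nth_count_le; first exact: sort_le_sorted.
  rewrite count_sort -has_count; apply/hasP; exists (tau i i).
    by apply/mapP; exists i; rewrite ?mem_enum.
  by rewrite /= Hdiag.
- have : nth 0 (sort <=%R l) 0 \in sort <=%R l.
    by rewrite mem_nth // size_sort size_map size_enum_ord (leq_ltn_trans (leq0n i) (ltn_ord i)).
  by rewrite mem_sort => /mapP [t _ ->]; exact: Hge.
Qed.

Theorem proposition3 (R : realType) (n k : nat) (tau : 'I_n -> 'I_n -> R)
  (sigma : 'I_n -> 'I_k) :
  (1 <= k)%N -> (k <= n)%N -> rtt_ok tau -> (forall j : 'I_k, exists i, sigma i = j) ->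
  ((exists nbr, nn_graph k tau nbr /\ admissible sigma nbr) ->
     Lavg tau sigma = (k * n)%:R^-1 * \sum_(i < n) \sum_(j < k) lam tau i j)
  /\
  ((forall i, Lmax tau sigma i = lam tau i k.-1) ->
   Lavg tau sigma = (k * n)%:R^-1 * \sum_(i < n) \sum_(j < k) lam tau i j ->
   exists nbr, nn_graph k tau nbr /\ admissible sigma nbr).
Proof.
move=> k1 kn rtt surj.
have [Hge [Hsym Hdiag]] := rtt.
have nz : ((k * n)%:R : R)^-1 != 0.
  by rewrite invr_eq0 pnatr_eq0 -lt0n muln_gt0 k1 (leq_trans k1 kn).
have Hf : forall i, exists g : 'I_k -> 'I_n, forall j, sigma (g j) = j /\
    latency tau sigma i j = tau (g j) i /\ (j = sigma i -> g j = i).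
  move=> i.
  have H : forall j, exists t, sigma t = j /\ latency tau sigma i j = tau t i /\
      (j = sigma i -> t = i).
    move=> j; have [t [Pt [Lt Mt]]] := @latency_char _ _ _ tau sigma i j rtt (surj j).
    case: (eqVneq j (sigma i)) => [Ej|Hj].
      exists i; split; first by rewrite Ej.
      split=> //; rewrite Lt Hdiag; apply/eqP; rewrite eq_le Hge andbT -(Hdiag i).
      by apply: Mt; rewrite Ej.
    by exists t; split=> //; split=> // E; rewrite E eqxx in Hj.
  by have [g Hg] := choice H; exists g.
have [F HF] := choice Hf.
have Finj : forall i, injective (F i).
  by move=> i j1 j2 E; have := congr1 sigma E; rewrite (HF i j1).1 (HF i j2).1.
have SL : forall i, \sum_(j < k) latency tau sigma i j = \sum_(j < k) tau (F i j) i.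
  by move=> i; apply: eq_bigr => j _; exact: (HF i j).2.1.
split.
- move=> [nbr [nn adm]]; rewrite /Lavg; congr (_ * _); apply: eq_bigr => i _.
  apply/eqP; rewrite eq_le; apply/andP; split; last first.
    by rewrite SL; exact: (@lower_i _ _ _ tau i (F i) (Finj i)).1.
  have [g Hg] : exists g : 'I_k -> 'I_n, forall j, g j \in i |: nbr i /\ sigma (g j) = j.
    by have [g Hg] := choice (adm i); exists g.
  have ginj : injective g.
    by move=> j1 j2 E; have := congr1 sigma E; rewrite (Hg j1).2 (Hg j2).2.
  have [ni [cn pe]] := nn i.
  have Hset : g @: [set: 'I_k] = i |: nbr i.
    apply/eqP; rewrite eqEcard; apply/andP; split.
      by apply/fintype.subsetP => t /imsetP [j _ ->]; exact: (Hg j).1.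
    by rewrite cardsU1 ni cn card_imset // cardsT card_ord /= add1n subn1 (prednK k1).
  apply: (@le_trans _ _ (\sum_(j < k) tau (g j) i)).
    apply: ler_sum => j _; have [t [Pt [Lt Mt]]] := @latency_char _ _ _ tau sigma i j rtt (surj j).
    by rewrite Lt; apply: Mt; exact: (Hg j).2.
  have -> : \sum_(j < k) tau (g j) i = \sum_(t in g @: [set: 'I_k]) tau t i.
    rewrite big_imset /=; last by move=> x y _ _; exact: ginj.
    by apply: eq_bigl => j; rewrite inE.
  rewrite Hset big_setU1 //= Hdiag add0r.
  rewrite -(big_mkord xpredT (lam tau i)) (big_ltn k1) lam0 // add0r.
  have -> : \sum_(t in nbr i) tau t i = \sum_(y <- [seq tau t i | t <- enum (nbr i)]) y.
    by rewrite big_map big_enum.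
  by rewrite (perm_big _ pe) big_map /index_iota.
- move=> _ HL.
  have E : \sum_(i < n) \sum_(j < k) latency tau sigma i j =
           \sum_(i < n) \sum_(j < k) lam tau i j.
    by rewrite /Lavg in HL; exact: (mulfI nz HL).
  have Pi : forall i, \sum_(j < k) lam tau i j = \sum_(j < k) tau (F i j) i.
    move=> i; apply/eqP; rewrite eq_sym -subr_eq0; apply/eqP.
    have : \sum_(i0 < n) (\sum_(j < k) tau (F i0 j) i0 - \sum_(j < k) lam tau i0 j) = 0.
      by rewrite sumrB -(eq_bigr _ (fun i _ => SL i)) E subrr.
    move/psumr_eq0P; apply => // i0 _; rewrite subr_ge0; exact: (@lower_i _ _ _ tau i0 (F i0) (Finj i0)).1.
  exists (fun i => F i @: [set~ sigma i]); split.
  + move=> i; have Fi := HF i.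
    have ni : i \notin F i @: [set~ sigma i].
      apply/imsetP => [[j]]; rewrite !inE => Hj Ei.
      have Es : sigma i = j by rewrite Ei (Fi j).1.
      by rewrite Es eqxx in Hj.
    split => //; split.
      by rewrite card_imset ?Finj // cardsC1 card_ord subn1.
    have p1 := (@lower_i _ _ _ tau i (F i) (Finj i)).2 (Pi i).
    have pe : perm_eq (enum 'I_k) (sigma i :: enum [set~ sigma i]).
      apply: uniq_perm; first exact: enum_uniq.
        by rewrite /= mem_enum !inE eqxx enum_uniq.
      move=> x; rewrite mem_enum in_cons mem_enum !inE.
      by case: eqVneq.
    have q : perm_eq (enum (F i @: [set~ sigma i])) [seq F i j | j <- enum [set~ sigma i]].
      apply: uniq_perm; first exact: enum_uniq.
        by rewrite map_inj_uniq ?enum_uniq //; exact: Finj.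
      move=> t; rewrite mem_enum; apply/imsetP/mapP => [[j Hj ->]|[j Hj ->]];
        exists j => //; by rewrite ?mem_enum in Hj *.
    have pe2 : perm_eq [seq tau t i | t <- enum (F i @: [set~ sigma i])]
                       [seq tau (F i j) i | j <- enum [set~ sigma i]].
      by have := perm_map (fun t => tau t i) q; rewrite -map_comp.
    have p3 : perm_eq [seq tau (F i j) i | j <- enum 'I_k]
                      (0 :: [seq tau (F i j) i | j <- enum [set~ sigma i]]).
      by have := perm_map (fun j => tau (F i j) i) pe; rewrite /= (Fi (sigma i)).2.2 // Hdiag.
    have ek : forall m, (0 < m)%N -> iota 0 m = 0%N :: iota 1 (m - 1).
      by case=> // m _; rewrite subSS subn0.
    apply: (perm_trans pe2); rewrite -(perm_cons 0).
    have -> : 0 :: [seq lam tau i j | j <- iota 1 (k - 1)] = [seq lam tau i j | j <- iota 0 k].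
      by rewrite (ek k k1) /= lam0.
    rewrite perm_sym in p3; exact: perm_trans p3 p1.
  + move=> i j; exists (F i j); split; last exact: (HF i j).1.
    rewrite /= !inE; case: (eqVneq j (sigma i)) => [Ej|Hj].
      by rewrite (HF i j).2.2 // eqxx.
    apply/orP; right; apply/imsetP; exists j => //; by rewrite !inE.
Qed.
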